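(* Fix a server $\mathrm{SP}_i$, a finite horizon $T$, a privacy budget $\varepsilon>0$ and a positive integer $T_s$ (the maximum number of sampling timestamps). Let $S=(D_{i,1},\dots,D_{i,T})$ be the finite stream of crowd-sourced databases held by $\mathrm{SP}_i$, and let $f$ be an aggregate function with sensitivity $\Delta f$ (with respect to adding/removing/changing one user's record in a single database $D_{i,t}$). The algorithm DPCrowd, run at $\mathrm{SP}_i$ as described in the context, satisfies user-level $\varepsilon$-differential privacy for the users registered at $\mathrm{SP}_i$ over the finite stream of length $T$: for every pair of streams $S,S'$ that differ only in the records of a single user (at any subset of the $T$ timestamps) and for every measurable set $O$ of possible output sequences, $$\Pr[\mathrm{DPCrowd}(S)\in O]\le e^{\varepsilon}\Pr[\mathrm{DPCrowd}(S')\in O].$$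
   Context: Setting: $m$ servers in a decentralized (time-varying) communication network; server $\mathrm{SP}_i$ holds at each timestamp $t$ a database $D_{i,t}$ with one row per user registered at $\mathrm{SP}_i$ at time $t$ (each row is a 0/1 vector over $d$ regions with at most one 1), and computes the aggregate $x_i(t)=f(D_{i,t})$ (e.g. the number of its users in a given region, for which $\Delta f=1$). The sensitivity is $\Delta f=\max\|f(D)-f(D')\|_1$ over databases $D,D'$ differing in one record. $\mathrm{Lap}(b)$ denotes the zero-mean Laplace distribution with density $\frac{1}{2b}e^{-|v|/b}$. Algorithm DPCrowd at $\mathrm{SP}_i$: for $t=1,\dots,T$, compute $x_i(t)=f(D_{i,t})$. If $t$ is a sampling point (the sampling decision is made by an adaptive rule that depends only on quantities the algorithm previously released/computed from noisy values) and fewer than $T_s$ sampling points have been used so far, then release $z_i(t)=x_i(t)+\upsilon_i(t)$ with fresh independent noise $\upsilon_i(t)\sim\mathrm{Lap}(\Delta f\cdot T_s/\varepsilon)$, increment the sample counter, and compute from $z_i(t)$, the previous estimates, and messages received from one-hop neighboring servers (Kalman-consensus information filter prediction/update, message broadcast, and sampling-rate adjustment) the released estimate $r_i(t)$. Otherwise set $z_i(t)=r_i(t-1)$, broadcast nothing, and compute $r_i(t)$ from previous estimates and neighbors' messages via the filter update. Thus the only step accessing the true aggregates $x_i(t)$ is the Laplace perturbation at at most $T_s$ sampling timestamps; all other computations (including the outputs, which are the released estimates and broadcast messages) are functions of the noisy values and of information (neighbors' messages) not depending on $\mathrm{SP}_i$'s stream. User-level DP means neighboring streams differ in all events of one user.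 *)

(* Defs.v *)
From HB Require Import structures.
From mathcomp Require Import all_boot all_order all_algebra.
From mathcomp Require Import all_classical all_reals all_analysis.

Set Implicit Arguments.
Unset Strict Implicit.
Unset Printing Implicit Defensive.

Import Order.TTheory GRing.Theory Num.Theory.
Import numFieldNormedType.Exports.
Local Open Scope classical_set_scope.
Local Open Scope ring_scope.

(* A row: a 0/1 vector over the d regions. *)
Definition row (d : nat) := {ffun 'I_d -> bool}.

Definition row_ok (d : nat) (r : row d) : bool := (#|[set j | r j]| <= 1)%N.

(* Database of server SP_i at one timestamp: for each user of the (finite)
   user population U, either None (user not registered at that time) or
   Some r (the user's row r). *)
Definition db (U : finType) (d : nat) := {ffun U -> option (row d)}.

Definition db_ok (U : finType) (d : nat) (D : db U d) : bool :=
  [forall u, if D u is Some r then row_ok r else true].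

Definition db_adj (U : finType) (d : nat) (D D' : db U d) : bool :=
  [exists u, [forall v, (v != u) ==> (D v == D' v)]].

Definition sensitivity (R : realType) (U : finType) (d : nat) (f : db U d -> R) : R :=
  \big[Num.max/0]_(D : db U d)
    \big[Num.max/0]_(D' : db U d | [&& db_ok D, db_ok D' & db_adj D D'])
       `|f D - f D'|.

Definition user_neighbors (U : finType) (d T : nat) (S S' : nat -> db U d) : Prop :=
  exists u : U, forall t, (t < T)%N -> forall v, v != u -> S t v = S' t v.

Definition lap_pdf (R : realType) (b v : R) : R := (2 * b)^-1 * expR (- `|v| / b).

(* The algorithm is described by its (arbitrary) noise-free processing:
   - St      : internal state (estimates, filter quantities, last message, ...),
               the whole state is regarded as released (this only makes the
               privacy claim stronger; actual outputs are functions of it);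
   - s0      : initial state;
   - sample t s : adaptive sampling decision at timestamp t, a function of the
               state computed from previously released/noisy values only;
   - stepS t s z : new state at a sampling point, given the noisy value
               z = x(t) + noise (filter prediction/update, broadcast,
               sampling-rate adjustment; neighbours' messages, which do not
               depend on SP_i's stream, are absorbed in the dependence on t);
   - stepN t s : new state at a non-sampling point (z = r(t-1), filter update).
   The only access to the stream is x(t) = f (S t), perturbed by fresh Laplace
   noise of scale Delta f * Ts / eps at at most Ts sampling points.

   dpcrowd_run n t k s h O = probability that the complete output sequence
   lies in O, given that n timestamps remain, the current timestamp is t,
   k samples were used, the current state is s and h is the output history. *)
Section DPCrowd.
Variables (R : realType) (U : finType) (d : nat) (f : db U d -> R).
Variables (eps : R) (Ts : nat).
Variables (St : Type) (sample : nat -> St -> bool)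
          (stepS : nat -> St -> R -> St) (stepN : nat -> St -> St).
Variables (S : nat -> db U d) (O : set (seq St)).

Local Open Scope ereal_scope.

Fixpoint dpcrowd_run (n t k : nat) (s : St) (h : seq St) : \bar R :=
  match n with
  | 0 => (\1_O h)%:E
  | n'.+1 =>
    if sample t s && (k < Ts)%N then
      \int[lebesgue_measure]_(v in [set: R])
        ((lap_pdf (sensitivity f * Ts%:R / eps) v)%:E *
         (let s' := stepS t s (f (S t) + v) in
          dpcrowd_run n' t.+1 k.+1 s' (rcons h s')))
    else
      let s' := stepN t s in dpcrowd_run n' t.+1 k s' (rcons h s')
  end.

End DPCrowd.

Definition dpcrowd_prob (R : realType) (U : finType) (d : nat) (f : db U d -> R)
  (eps : R) (Ts : nat) (St : Type) (s0 : St) (sample : nat -> St -> bool)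
  (stepS : nat -> St -> R -> St) (stepN : nat -> St -> St)
  (T : nat) (S : nat -> db U d) (O : set (seq St)) : \bar R :=
  dpcrowd_run f eps Ts sample stepS stepN S O T 0 0 s0 [::].

(* Main.v *)
Require Import Defs.
From HB Require Import structures.
From mathcomp Require Import all_boot all_order all_algebra.
From mathcomp Require Import all_classical all_reals all_analysis.
From mathcomp Require Import ring lra.
Import Order.TTheory GRing.Theory Num.Theory.
Import numFieldNormedType.Exports.
Local Open Scope classical_set_scope.
Local Open Scope ring_scope.
Section S.
Context {R : realType}.
Local Notation mu := (@lebesgue_measure R).
Variable c : R.
Definition shiftR (x : R) : R := x + c.
Lemma mshift : measurable_fun [set: R] shiftR.
Proof. apply: measurable_realfun.measurable_funD => //; exact: measurable_cst. Qed.
Definition pshift : set (measurableTypeR R) -> \bar R := pushforward mu shiftR.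
Let p0 : pshift set0 = 0%E.
Proof. by rewrite /pshift /pushforward preimage_set0 measure0. Qed.
Let pge0 A : (0 <= pshift A)%E.
Proof. by rewrite /pshift /pushforward; apply: measure_ge0. Qed.
Let mpre (Y : set R) : measurable Y -> measurable (shiftR @^-1` Y).
Proof. move=> mY; have := @mshift measurableT Y mY; by rewrite setTI. Qed.
Let psig : semi_sigma_additive pshift.
Proof.
move=> F mF tF mUF; rewrite /pshift /pushforward preimage_bigcup.
apply: measure_semi_sigma_additive.
- by move=> n; apply: mpre; exact: (mF n).
- apply/trivIsetP => /= i j _ _ ij; rewrite -preimage_setI.
  by move/trivIsetP : tF => /(_ _ _ _ _ ij) ->//; rewrite preimage_set0.
- by rewrite -preimage_bigcup; apply: mpre; exact: mUF.
Qed.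
HB.instance Definition _ := isMeasure.Build _ _ _ pshift p0 pge0 psig.

Lemma leb_shift (A : set R) : measurable A -> mu (shiftR @^-1` A) = mu A.
Proof.
move=> mA; apply/esym.
apply: (@lebesgue_measure_unique R pshift) => // _ [[a b]] _ <-.
rewrite /pshift /pushforward.
rewrite /=.
rewrite [X in _ = mu X](_ : _ = `]a - c, b - c]%classic); last first.
  apply/seteqP; split => y /=; rewrite /shiftR !in_itv /=.
    by move=> /andP[h1 h2]; rewrite ltrBlDr lerBrDr h1 h2.
  by rewrite ltrBlDr lerBrDr.

rewrite !lebesgue_measure_itv /= !lte_fin ltrD2r.
case: ifP => // _. rewrite -EFinD; congr (_%:E). ring.
Qed.
Import HBNNSimple.
Local Notation T := (measurableTypeR R).
Section hsh.
Variable h : {nnsfun T >-> R}.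
Definition hsh : T -> R := fun x => h (shiftR x).
Lemma hsh_mfun : measurable_fun [set: T] hsh.
Proof.
move=> _ Y mY; rewrite setTI.
have := @measurable_funPT _ _ _ _ h measurableT Y mY; rewrite setTI => mh.
exact (mpre _ mh).
Qed.
HB.instance Definition _ := isMeasurableFun.Build _ _ _ _ hsh hsh_mfun.
Lemma hsh_fin : finite_set (range hsh).
Proof.
apply: (sub_finite_set _ (@fimfunP _ _ h)) => _ [x _ <-]; by exists (shiftR x).
Qed.
HB.instance Definition _ := FiniteImage.Build _ _ hsh hsh_fin.
Lemma hsh_ge0 x : 0 <= hsh x. Proof. exact: fun_ge0. Qed.
HB.instance Definition _ := isNonNegFun.Build _ _ hsh hsh_ge0.
Definition hshn : {nnsfun T >-> R} := hsh.
Lemma sintegral_shift : sintegral mu hsh = sintegral mu h.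
Proof.
rewrite !sintegralET; apply: eq_fsbigr => x _; congr (_ * _)%E.
rewrite -(@leb_shift (h @^-1` [set x])) //.
by have := @measurable_funPT _ _ _ _ h measurableT [set x] (measurable_set1 x); rewrite setTI.
Qed.
End hsh.
End S.

Section IntLemmas.
Context {R : realType}.
Local Notation mu := (@lebesgue_measure R).
Local Open Scope ereal_scope.

Lemma int_shift_le (F : R -> \bar R) (c : R) : (forall x, 0 <= F x) ->
  \int[mu]_(v in [set: R]) F v <= \int[mu]_(v in [set: R]) F (v + c)%R.
Proof.
move=> F0; rewrite !ge0_integralTE //.
apply: ge_ereal_sup => _ [h hF <-].
rewrite -(sintegral_shift c h).
apply: ereal_sup_ubound; exists (hshn c h) => // x.
exact: hF.
Qed.

Lemma int_mono (F G : R -> \bar R) : (forall x, 0 <= F x) ->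
  (forall x, F x <= G x) ->
  \int[mu]_(v in [set: R]) F v <= \int[mu]_(v in [set: R]) G v.
Proof.
move=> F0 FG; have G0 : forall x, 0 <= G x by move=> x; exact: le_trans (F0 x) (FG x).
rewrite !ge0_integralTE //.
apply: ge_ereal_sup => _ [h hF <-].
apply: ereal_sup_ubound; exists h => // x.
exact: le_trans (hF x) (FG x).
Qed.

Lemma int_scale_le (F : R -> \bar R) (k : R) : (0 <= k)%R -> (forall x, 0 <= F x) ->
  \int[mu]_(v in [set: R]) (k%:E * F v) <= k%:E * \int[mu]_(v in [set: R]) F v.
Proof.
move=> k0 F0.
have [->|kn0] := eqVneq k 0%R.
  rewrite mul0e integral0_eq // => x _; by rewrite mul0e.
have kp : (0 < k)%R by rewrite lt_def kn0 k0.
have kF0 : forall x, 0 <= k%:E * F x by move=> x; apply: mule_ge0.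
rewrite !ge0_integralTE //.
apply: ge_ereal_sup => _ [h hF <-].
have ki0 : (0 <= k^-1)%R by rewrite invr_ge0.
pose g := scale_nnsfun h ki0.
have -> : sintegral mu (HBNNSimple.NonNegSimpleFun.sort h) = k%:E * sintegral mu (HBNNSimple.NonNegSimpleFun.sort g).
  rewrite -sintegralrM; apply: eq_sintegral => x /=.
  by rewrite mulrA mulfV // mul1r.
apply: lee_wpmul2l; first by rewrite lee_fin.
apply: ereal_sup_ubound; exists g => // x /=.
have := hF x; have := F0 x.
case: (F x) => [r| |] //= _.
by rewrite !lee_fin ler_pdivrMl.
by move=> _; rewrite leey.
Qed.

Lemma lap_pdf_ge0 (b v : R) : (0 <= b)%R -> (0 <= lap_pdf b v)%R.
Proof.
move=> b0; rewrite /lap_pdf; apply: mulr_ge0; last exact: expR_ge0.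
by rewrite invr_ge0 mulr_ge0.
Qed.

Lemma lap_pdf_shift (b w del : R) : (0 < b)%R ->
  (lap_pdf b (w + del) <= expR (`|del| / b) * lap_pdf b w)%R.
Proof.
move=> b0; rewrite /lap_pdf mulrCA; apply: ler_wpM2l.
  by rewrite invr_ge0 mulr_ge0 // ltW.
rewrite -expRD ler_expR -mulrDl.
apply: ler_wpM2r; first by rewrite invr_ge0 ltW.
have : (`|w| <= `|w + del| + `|del|)%R.
  by have := ler_normB (w + del)%R del; rewrite addrK.
lra.
Qed.

Lemma key (b Del C x x' : R) (G G' : R -> \bar R) :
  (0 < b)%R -> (0 <= C)%R -> (`|x' - x| <= Del)%R ->
  (forall z, 0 <= G z) -> (forall z, 0 <= G' z) ->
  (forall z, G z <= C%:E * G' z) ->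
  \int[mu]_(v in [set: R]) ((lap_pdf b v)%:E * G (x + v)%R) <=
  (expR (Del / b) * C)%:E * \int[mu]_(v in [set: R]) ((lap_pdf b v)%:E * G' (x' + v)%R).
Proof.
move=> b0 C0 hx G0 G'0 GG.
have p0 v : (0 <= lap_pdf b v)%R by apply: lap_pdf_ge0; exact: ltW.
apply: (@le_trans _ _ (\int[mu]_(v in [set: R]) ((lap_pdf b v)%:E * (C%:E * G' (x + v)%R)))).
  apply: int_mono => v; first by apply: mule_ge0; rewrite ?lee_fin.
  by apply: lee_wpmul2l; rewrite ?lee_fin.
apply: (le_trans (int_shift_le _ (x' - x) _)).
  by move=> v; apply: mule_ge0; rewrite ?lee_fin //; apply: mule_ge0; rewrite ?lee_fin.
apply: (le_trans _ (@int_scale_le (fun v => (lap_pdf b v)%:E * G' (x' + v)%R) (expR (Del / b) * C) _ _)); last 2 first.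
- by apply: mulr_ge0 => //; exact: expR_ge0.
- by move=> v; apply: mule_ge0; rewrite ?lee_fin.
apply: int_mono => v.
  by apply: mule_ge0; rewrite ?lee_fin //; apply: mule_ge0; rewrite ?lee_fin.
have -> : (x + (v + (x' - x)))%R = (x' + v)%R by ring.
rewrite !muleA -!EFinM; apply: lee_wpmul2r => //.
rewrite lee_fin -[(expR _ * C * _)%R]mulrA [(C * _)%R]mulrC mulrA.
apply: ler_wpM2r => //.
apply: (le_trans (lap_pdf_shift b v (x' - x) b0)).
apply: ler_wpM2r; first exact: p0.
rewrite ler_expR.
by apply: ler_wpM2r => //; rewrite invr_ge0 ltW.
Qed.

End IntLemmas.

Section Main.
Variables (R : realType) (U : finType) (d T Ts : nat) (eps : R)
  (f : db U d -> R) (St : Type) (s0 : St) (sample : nat -> St -> bool)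
  (stepS : nat -> St -> R -> St) (stepN : nat -> St -> St)
  (S S' : nat -> db U d) (O : set (seq St)).
Hypotheses (eps0 : 0 < eps) (Ts0 : (0 < Ts)%N) (sens0 : 0 < sensitivity f)
  (okS : forall t, (t < T)%N -> db_ok (S t))
  (okS' : forall t, (t < T)%N -> db_ok (S' t))
  (nb : user_neighbors T S S').

Let b := sensitivity f * Ts%:R / eps.
Let a := eps / Ts%:R.

Let Tsn0 : (Ts%:R : R) != 0.
Proof. by rewrite pnatr_eq0 -lt0n. Qed.

Let b_gt0 : 0 < b.
Proof. by rewrite /b divr_gt0 // mulr_gt0 // ltr0n. Qed.

Let Del_b : sensitivity f / b = a.
Proof.
rewrite /b /a; field.
by rewrite Tsn0 (gt_eqF eps0) (gt_eqF sens0).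
Qed.

Local Open Scope ereal_scope.

Let run SS := dpcrowd_run f eps Ts sample stepS stepN SS O.

Let run_ge0 SS n : forall t k s h, 0 <= run SS n t k s h.
Proof.
rewrite /run; elim: n => [|n IH] t k s h /=.
  by rewrite lee_fin indicE ler0n.
case: ifP => _; last exact: IH.
apply: integral_ge0 => v _; apply: mule_ge0; last exact: IH.
by rewrite lee_fin; apply: lap_pdf_ge0; exact: ltW.
Qed.

Let sens_bound t : (t < T)%N -> (`|f (S' t) - f (S t)| <= sensitivity f)%R.
Proof.
move=> tT; rewrite /sensitivity.
apply: (le_trans _ (le_bigmax _ _ (S' t))).
apply: (le_bigmax_cond _ (j := S t)).
rewrite okS // okS' //=.
case: nb => u hu; apply/existsP; exists u; apply/forallP => v; apply/implyP => hv.
by apply/eqP; rewrite hu.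
Qed.

Let main n : forall t k s h, (t + n <= T)%N ->
  run S n t k s h <= (expR (a * (Ts - k)%:R))%:E * run S' n t k s h.
Proof.
rewrite /run; elim: n => [|n IH] t k s h Htn /=.
  apply: lee_pemull; first by rewrite lee_fin indicE ler0n.
  rewrite lee_fin; apply: le_trans (expR_ge1Dx _); rewrite lerDl.
  by apply: mulr_ge0; [apply: divr_ge0; [exact: ltW | exact: ler0n] | exact: ler0n].
have Htn' : (t.+1 + n <= T)%N by rewrite addSnnS.
case: ifP => Hs; last exact: IH.
have kTs : (k < Ts)%N by case/andP: Hs.
have -> : expR (a * (Ts - k)%:R) = (expR (sensitivity f / b) * expR (a * (Ts - k.+1)%:R))%R.
  rewrite -expRD Del_b -(subnSK kTs) -addn1 natrD; congr expR; ring.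
apply: (key b (sensitivity f) (expR (a * (Ts - k.+1)%:R)) (f (S t)) (f (S' t))
            (fun z => run S n t.+1 k.+1 (stepS t s z) (rcons h (stepS t s z)))
            (fun z => run S' n t.+1 k.+1 (stepS t s z) (rcons h (stepS t s z)))).
- exact: b_gt0.
- exact: expR_ge0.
- apply: sens_bound; apply: (leq_trans _ Htn); by rewrite -addSnnS leq_addr.
- by move=> z; apply: run_ge0.
- by move=> z; apply: run_ge0.
- by move=> z; apply: IH.
Qed.

Lemma main_final :
  (dpcrowd_prob f eps Ts s0 sample stepS stepN T S O <=
   (expR eps)%:E * dpcrowd_prob f eps Ts s0 sample stepS stepN T S' O)%E.
Proof.
have := main T 0 0 s0 [::] (leqnn T).
by rewrite subn0 /a divfK.
Qed.

End Main.

Theorem theorem4 (R : realType) (U : finType) (d T Ts : nat) (eps : R)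
  (f : db U d -> R) (St : Type) (s0 : St) (sample : nat -> St -> bool)
  (stepS : nat -> St -> R -> St) (stepN : nat -> St -> St)
  (S S' : nat -> db U d) (O : set (seq St)) :
  0 < eps -> (0 < Ts)%N -> 0 < sensitivity f ->
  (forall t, (t < T)%N -> db_ok (S t)) ->
  (forall t, (t < T)%N -> db_ok (S' t)) ->
  user_neighbors T S S' ->
  (dpcrowd_prob f eps Ts s0 sample stepS stepN T S O <=
   (expR eps)%:E * dpcrowd_prob f eps Ts s0 sample stepS stepN T S' O)%E.
Proof.
exact: main_final.
Qed.
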